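(* Let $t>2$ be an integer and $n=2t+1$. In the cyclic group $\mathbb{Z}_{2t+1}$, the family of sets $\{2,3\},\{4,5\},\dots,\{2t-2,2t-1\}$ (i.e. $\{2i,2i+1\}$ for $1\le i\le t-1$) is a $(2t+1,t-1,2,0,t-1)$-DPDF which is not an EPDF (for any parameters).
   Context: In an additive group $G$ with identity $0$, let $G^*=G\setminus\{0\}$. For $D\subseteq G$, $\Delta(D)$ is the multiset $\{x-y:x,y\in D,x\ne y\}$; for $D_1,D_2\subseteq G$, $\Delta(D_1,D_2)$ is the multiset $\{x-y:x\in D_1,y\in D_2\}$. For a family $A=\{A_1,\dots,A_s\}$ of pairwise disjoint subsets, ${\rm Int}(A)=\bigcup_i\Delta(A_i)$ and ${\rm Ext}(A)=\bigcup_{i\ne j}\Delta(A_i,A_j)$ (multiset unions). For $|G|=v$, a $(v,s,k,\lambda,\mu)$-DPDF is a family of $s$ pairwise disjoint $k$-subsets of $G^*$ with union $S$ such that ${\rm Int}(A)$ contains each element of $S$ exactly $\lambda$ times and each element of $G\setminus(S\cup\{0\})$ exactly $\mu$ times; a $(v,s,k,\lambda,\mu)$-EPDF is defined the same way using ${\rm Ext}(A)$. *)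

(* Defs.v *)
From HB Require Import structures.
From mathcomp Require Import all_boot all_order all_algebra.
Set Implicit Arguments. Unset Strict Implicit. Unset Printing Implicit Defensive.
Import GRing.Theory.
Local Open Scope ring_scope.

Definition diff_pairs (G : finZmodType) (X Y : {set G}) (distinct : bool) (g : G)
  : {set G * G} :=
  [set p : G * G | [&& p.1 \in X, p.2 \in Y, (distinct ==> (p.1 != p.2)) &
                    p.1 - p.2 == g]].

(* multiplicity of g in Int(A) = union of Delta(A_i) *)
Definition int_mult (G : finZmodType) (s : nat) (A : 'I_s -> {set G}) (g : G) : nat :=
  \sum_(i < s) #|diff_pairs (A i) (A i) true g|.

(* multiplicity of g in Ext(A) = union over i != j of Delta(A_i, A_j) *)
Definition ext_mult (G : finZmodType) (s : nat) (A : 'I_s -> {set G}) (g : G) : nat :=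
  \sum_(i < s) \sum_(j < s | i != j)
     #|diff_pairs (A i) (A j) false g|.

Definition union_fam (G : finZmodType) (s : nat) (A : 'I_s -> {set G}) : {set G} :=
  \bigcup_(i < s) A i.

Definition base_family (G : finZmodType) (v s k : nat) (A : 'I_s -> {set G}) : Prop :=
  [/\ #|G| = v,
      (forall i : 'I_s, #|A i| = k /\ (0 : G) \notin A i) &
      (forall i j : 'I_s, i != j -> [disjoint A i & A j])].

Definition DPDF (G : finZmodType) (v s k lambda mu : nat) (A : 'I_s -> {set G}) : Prop :=
  base_family v k A /\
  forall g : G, g != 0 ->
    int_mult A g = (if g \in union_fam A then lambda else mu).

Definition EPDF (G : finZmodType) (v s k lambda mu : nat) (A : 'I_s -> {set G}) : Prop :=
  base_family v k A /\
  forall g : G, g != 0 ->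
    ext_mult A g = (if g \in union_fam A then lambda else mu).

(* The family {2i, 2i+1}, 1 <= i <= t-1, in Z_(2t+1), indexed by i-1 : 'I_(t-1). *)
Definition fam13 (t : nat) (i : 'I_(t.-1)) : {set 'Z_(2 * t + 1)} :=
  [set ((2 * i.+1)%N)%:R; ((2 * i.+1 + 1)%N)%:R].

Arguments DPDF {G} v s k lambda mu A.
Arguments EPDF {G} v s k lambda mu A.

(* Main.v *)
Require Import Defs.
From mathcomp Require Import all_boot all_order all_algebra zify.
Import GRing.Theory.
Local Open Scope ring_scope.

Lemma eqZ p (hp : (1 < p)%N) a b : ((a%:R : 'Z_p) == b%:R) = (a %% p == b %% p)%N.
Proof. by rewrite -(inj_eq val_inj) /= !val_Zp_nat. Qed.

Lemma mod2 x p : (x < 2 * p)%N -> (x %% p = if x < p then x else x - p)%N.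
Proof.
move=> h2; case: (ltnP x p) => h1; first by rewrite modn_small.
by rewrite -{1}(subnK h1) modnDr modn_small //; lia.
Qed.

Lemma subZ p (hp : (1 < p)%N) a b c : (a < p)%N -> (b < p)%N -> (c < p)%N ->
  ((a%:R : 'Z_p) - b%:R == c%:R) = ((a == c + b) || (a + p == c + b))%N.
Proof.
move=> ha hb hc; rewrite subr_eq -natrD eqZ // (modn_small ha) mod2; last lia.
case: (ltnP (c + b) p) => h; repeat (case: eqP => /= ?); lia.
Qed.


Lemma card_dp (G : finZmodType) (X Y : {set G}) d g :
  #|diff_pairs X Y d g| = (\sum_(x in X) \sum_(y in Y) ((d ==> (x != y)) && ((x - y)%R == g) : nat))%N.
Proof.
rewrite pair_big_dep /= -sum1_card /diff_pairs big_mkcond [RHS]big_mkcond /=.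
apply: eq_bigr => p _; rewrite inE.
by case: (p.1 \in X); case: (p.2 \in Y) => //=; case: (_ && _).
Qed.

Lemma big_pair (G : finType) (a b : G) (F : G -> nat) : a != b ->
  (\sum_(x in [set a; b]) F x = F a + F b)%N.
Proof. by move=> hab; rewrite big_setU1 ?big_set1 // in_set1. Qed.

Lemma int13 t (ht : (2 < t)%N) k (hk : (k < 2*t+1)%N) :
  int_mult (@fam13 t) k%:R = (t.-1 * ((k == 1) + (k == 2*t)))%N.
Proof.
have hp : (1 < 2*t+1)%N by lia.
rewrite /int_mult (eq_bigr (fun _ => ((k == 1) + (k == 2*t))%N)) ?sum_nat_const ?card_ord //.
move=> i _; have hi := ltn_ord i.
have hab : ((2 * i.+1)%N%:R : 'Z_(2*t+1)) != (2 * i.+1 + 1)%N%:R.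
  by rewrite eqZ // !modn_small //; lia.
rewrite card_dp /fam13 !big_pair // !subZ //; try lia. rewrite !eqZ // !modn_small /=; try lia.


Qed.

Lemma mem13 t (ht : (2 < t)%N) k (hk : (k < 2*t+1)%N) :
  ((k%:R : 'Z_(2*t+1)) \in union_fam (@fam13 t)) = (2 <= k <= 2*t-1)%N.
Proof.
have hp : (1 < 2*t+1)%N by lia.
apply/bigcupP/idP.
  case=> i _; have hi := ltn_ord i; rewrite /fam13 in_set2 !eqZ // !modn_small; lia.
move=> h; have hi : ((k %/ 2).-1 < t.-1)%N by lia.
exists (Ordinal hi) => //; rewrite /fam13 in_set2 !eqZ // !modn_small /=; lia.
Qed.

Lemma S1 (i d m : nat) : (0 < d)%N ->
  (\sum_(j < m | i != j) (i == j + d) = ((d <= i) && (i - d < m)))%N.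
Proof.
move=> hd; rewrite big_mkcond.
transitivity (\sum_(j < m) (i == j + d))%N.
  by apply: eq_bigr => j _; case: eqP => [->|//] /=; lia.
elim: m => [|m IH]; first by rewrite big_ord0; lia.
rewrite big_ord_recr /= IH; lia.
Qed.

Lemma S2 (d m : nat) :
  (\sum_(i < m) ((d <= i) && (i - d < m)) = m - d)%N.
Proof.
transitivity (\sum_(i < m) (d <= i))%N.
  by apply: eq_bigr => i _; have := ltn_ord i; lia.
elim: m => [|m IH]; first by rewrite big_ord0; lia.
rewrite big_ord_recr /= IH; lia.
Qed.

Lemma ext2 t (ht : (2 < t)%N) :
  ext_mult (@fam13 t) 2%:R = (2 * (t.-1 - 1))%N.
Proof.
have hp : (1 < 2*t+1)%N by lia.
rewrite /ext_mult.
transitivity (\sum_(i < t.-1) \sum_(j < t.-1 | i != j) (((i:nat) == j + 1) + ((i:nat) == j + 1)))%N.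
  apply: eq_bigr => i _; apply: eq_bigr => j _.
  have hi := ltn_ord i; have hj := ltn_ord j.
  have hab : forall l : nat, (l < t.-1)%N -> ((2 * l.+1)%N%:R : 'Z_(2*t+1)) != (2 * l.+1 + 1)%N%:R.
    by move=> l hl; rewrite eqZ // !modn_small //; lia.
  rewrite card_dp /fam13 !big_pair ?hab // /= !subZ //; lia.
rewrite (eq_bigr (fun i : 'I_t.-1 => (((1 <= i) && (i - 1 < t.-1)) + ((1 <= i) && (i - 1 < t.-1)))%N)).
  by rewrite big_split /= S2; lia.
by move=> i _; rewrite big_split /= S1.
Qed.

Lemma ext3 t (ht : (2 < t)%N) :
  ext_mult (@fam13 t) 3%:R = ((t.-1 - 2) + (t.-1 - 1))%N.
Proof.
have hp : (1 < 2*t+1)%N by lia.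
rewrite /ext_mult.
transitivity (\sum_(i < t.-1) \sum_(j < t.-1 | i != j) (((i:nat) == j + 2) + ((i:nat) == j + 1)))%N.
  apply: eq_bigr => i _; apply: eq_bigr => j _.
  have hi := ltn_ord i; have hj := ltn_ord j.
  have hab : forall l : nat, (l < t.-1)%N -> ((2 * l.+1)%N%:R : 'Z_(2*t+1)) != (2 * l.+1 + 1)%N%:R.
    by move=> l hl; rewrite eqZ // !modn_small //; lia.
  rewrite card_dp /fam13 !big_pair ?hab // /= !subZ //; lia.
rewrite (eq_bigr (fun i : 'I_t.-1 => (((2 <= i) && (i - 2 < t.-1)) + ((1 <= i) && (i - 1 < t.-1)))%N)).
  by rewrite big_split /= !S2.
by move=> i _; rewrite big_split /= !S1.
Qed.

Theorem mainTheorem13 (t : nat) (ht : (2 < t)%N) :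
  DPDF (2 * t + 1) t.-1 2 0 t.-1 (@fam13 t) /\
  (forall v k lambda mu : nat, ~ EPDF v t.-1 k lambda mu (@fam13 t)).
Proof.
have hp : (1 < 2*t+1)%N by lia.
have hval : forall x : 'Z_(2*t+1), (x < 2*t+1)%N.
  by move=> x; apply: leq_trans (ltn_ord x) _; rewrite Zp_cast.
have z0 : (0 : 'Z_(2*t+1)) = 0%N%:R by [].
split.
  split.
    split.
    - by rewrite card_ord Zp_cast.
    - move=> i; have hi := ltn_ord i.
      rewrite /fam13 cards2 in_set2 z0 !eqZ // !modn_small //; try lia.
    - move=> i j hij; have hij' : (i:nat) <> j by move=> h; move: hij; rewrite (val_inj h) eqxx.
      have hi := ltn_ord i; have hj := ltn_ord j.
      rewrite -setI_eq0; apply/eqP/setP => x; rewrite /fam13 !inE -[x]natr_Zp !eqZ // !modn_small //; try lia.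
  move=> g hg; have hg0 : (g:nat) != 0%N.
    by apply: contra hg => /eqP h; apply/eqP/val_inj.
  have hgn := hval g; rewrite -[g]natr_Zp int13 // mem13 //; case: ifP; lia.
move=> v k l mu [_ H].
have hc : forall c, (1 < c < 4)%N -> ext_mult (@fam13 t) c%:R = l.
  move=> c hc; rewrite H; last by rewrite z0 eqZ // !modn_small //; lia.
  rewrite mem13 //; last lia.
  case: ifP => //; lia.
have := hc 2%N isT; have := hc 3%N isT.
rewrite ext2 // ext3 //; lia.
Qed.
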